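(* Let $p\ge3$ be a prime and $d\in D_p$. (1) If $p=3$, then (a) $\binom{2d}{d}_{\#3}=\binom{3d}{d}_{\#3}$; (b) $\binom{2d+1}{d}_{\#3}=\binom{3d+2}{d}_{\#3}$; and for all integers $a$ with $0\le a\le 2d$: (c) $\big(\binom ad\binom{3d-a}{d}\big)_{\#3}\ge\binom{2d}{d}_{\#3}$; (d) $\big(\binom ad\binom{3d-1-a}{d}\big)_{\#3}\ge\binom{2d}{d}_{\#3}$; (e) $\big(\binom ad\binom{3d+1-a}{d+1}\big)_{\#3}\ge\binom{2d+1}{d}_{\#3}$. (2) If $p\ge5$, then (a) $\binom{2d}{d}_{\#p}=\binom{3d}{d}_{\#p}$; and for all integers $a$ with $0\le a\le 2d$: (b) $\big(\binom ad\binom{3d-a}{d}\big)_{\#p}\ge\binom{2d}d_{\#p}$; (c) $\big(\binom ad\binom{3d-1-a}{d}\big)_{\#p}\ge\binom{2d}d_{\#p}$; (d) $\big(\binom a{d-1}\binom{3d-2-a}{d}\big)_{\#p}\ge\binom{2d}d_{\#p}$.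
   Context: For an integer $M$ and prime $p$, $M_{\#p}=\sup\{k: p^k\mid M\}$ (so $0_{\#p}=\infty$); $\binom{m}{i}_{\#p}$ means $(\binom mi)_{\#p}$. For integers $m,i$: $\binom mi=\frac{m(m-1)\cdots(m-i+1)}{i!}$ if $i>0$, $1$ if $i=0$, $0$ if $i<0$. Sets $D_p$: $D_3$ is the smallest set of non-negative integers containing $0$ such that $d\in D_3$ implies $3d,3d+2\in D_3$. For a prime $p\ge5$, let $\pi_p$ be the largest integer with $\pi_p<p/3$; $D_p$ is the smallest set of non-negative integers containing $[0,\pi_p]\cap\mathbb Z$ such that for each $d\in D_p$, every non-negative integer in $[pd-\pi_p,pd+\pi_p]$ lies in $D_p$. *)

(* Defs.v *)
From HB Require Import structures.
From mathcomp Require Import all_boot all_order all_algebra.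
Set Implicit Arguments. Unset Strict Implicit. Unset Printing Implicit Defensive.
Import Order.TTheory GRing.Theory Num.Theory.

Definition binz (m i : int) : int :=
  match i with
  | Posz n => ((\prod_(k < n) (m - (k%:Z)))%R %/ (n`!)%:Z)%Z
  | Negz _ => 0%R
  end.

(* p-adic valuation M_{#p} = sup {k : p^k | M}, with 0_{#p} = infinity.
   None encodes infinity. For M <> 0 and p prime, the sup is logn p |M|. *)
Definition vp (p : nat) (M : int) : option nat :=
  if M == 0%R then None else Some (logn p `|M|%N).

Definition vge (x y : option nat) : bool :=
  match x, y with
  | None, _ => true
  | Some _, None => false
  | Some a, Some b => (b <= a)%N
  end.

Inductive D3 : nat -> Prop :=
  | D3_0 : D3 0
  | D3_mul d : D3 d -> D3 (3 * d)
  | D3_add d : D3 d -> D3 (3 * d + 2).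

(* pi_p = largest integer < p/3, i.e. floor((p-1)/3) *)
Definition pip (p : nat) : nat := p.-1 %/ 3.

Inductive Dge5 (p : nat) : nat -> Prop :=
  | Dge5_base k : (k <= pip p)%N -> Dge5 p k
  | Dge5_step d k : Dge5 p d -> (p * d - pip p <= k <= p * d + pip p)%N -> Dge5 p k.

Definition Dset (p : nat) (d : nat) : Prop :=
  if p == 3 then D3 d else Dge5 p d.

(* Main.v *)
Require Import Defs.
From HB Require Import structures.
From mathcomp Require Import all_boot all_order all_algebra.
From Stdlib Require Import Lia.
Import Order.TTheory GRing.Theory Num.Theory.

Ltac mlia := intros;
  repeat match goal with
  | H : is_true (leq _ _) |- _ => move/ssrnat.leP: H => H
  end;
  try match goal with |- is_true (leq _ _) => apply/ssrnat.leP end;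
  repeat match goal with
  | H : context [addn] |- _ => rewrite -plusE in H
  | H : context [subn] |- _ => rewrite -minusE in H
  | H : context [muln] |- _ => rewrite -multE in H
  | |- context [addn] => rewrite -plusE
  | |- context [subn] => rewrite -minusE
  | |- context [muln] => rewrite -multE
  end; lia.

Lemma binzE (m n : nat) : binz m n = Posz ('C(m, n)).
Proof.
rewrite /binz.
have -> : (\prod_(k < n) (Posz m - Posz k) = Posz (m ^_ n))%R.
  elim: n => [|n IH]; first by rewrite big_ord0 ffactn0.
  rewrite big_ord_recr /= IH ffactnSr.
  case: (leqP n m) => h.
    by rewrite subzn // PoszM.
  by rewrite ffact_small // mul0r.
by rewrite -bin_ffact divz_nat mulnK ?fact_gt0.
Qed.

Lemma vpPos p m : (0 < m)%N -> vp p (Posz m) = Some (logn p m).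
Proof. by rewrite /vp; case: m. Qed.

Lemma modsum e f q : (0 < q)%N ->
  (e %% q + f %% q = (e + f) %% q \/ e %% q + f %% q = (e + f) %% q + q)%N.
Proof.
move=> q0; rewrite modnD //.
have h1 := ltn_pmod e q0; have h2 := ltn_pmod f q0.
case: leqP => h; [right|left]; rewrite /= ?mul1n ?mul0n; mlia.
Qed.

Lemma logn_factB p m B : prime p -> (m < B)%N ->
  logn p m`! = \sum_(1 <= i < B) m %/ p ^ i.
Proof.
move=> pp mB; rewrite logn_fact // [RHS](big_cat_nat (n := m.+1)) //=.
rewrite [X in _ = _ + X]big1_seq ?addn0 // => i /andP[_].
rewrite mem_index_iota => /andP[hi _]; rewrite divn_small //.
apply: leq_trans (ltn_expl _ (prime_gt1 pp)); exact: ltnW.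
Qed.

Lemma lognC p n k B : prime p -> (n + k < B)%N ->
  logn p 'C(n + k, n) = \sum_(1 <= i < B) (p ^ i <= n %% p ^ i + k %% p ^ i).
Proof.
move=> pp nkB.
have hb := bin_fact (leq_addr k n); rewrite addKn in hb.
have := congr1 (logn p) hb.
rewrite !lognM ?muln_gt0 ?fact_gt0 ?bin_gt0 ?leq_addr //.
have kB : (k < B)%N by apply: leq_ltn_trans nkB; rewrite leq_addl.
have nB : (n < B)%N by apply: leq_ltn_trans nkB; rewrite leq_addr.
rewrite !(@logn_factB p _ B) //.
have e : \sum_(1 <= i < B) (n + k) %/ p ^ i =
   \sum_(1 <= i < B) (n %/ p ^ i) + \sum_(1 <= i < B) (k %/ p ^ i) +
   \sum_(1 <= i < B) (p ^ i <= n %% p ^ i + k %% p ^ i).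
  rewrite -!big_split /=; apply: eq_bigr => i _.
  by rewrite divnD // expn_gt0 prime_gt0.
rewrite e => h; apply/eqP; rewrite -(eqn_add2r (\sum_(1 <= i < B) n %/ p ^ i + \sum_(1 <= i < B) k %/ p ^ i)).
by rewrite h addnC.
Qed.
Definition G3 (r q : nat) : Prop :=
  (3 * r + 3 <= q)%coq_nat \/ ((2 * q <= 3 * r)%coq_nat /\ (r + 1 = q \/ (r + 3 <= q)%coq_nat)).
Definition G5 (r q : nat) : Prop := (3 * r < q)%coq_nat \/ (2 * q < 3 * r)%coq_nat.

Lemma good3 d0 : D3 d0 -> forall i, (0 < i)%N -> G3 (d0 %% 3 ^ i) (3 ^ i).
Proof.
elim => [|d _ IH|d _ IH] [|i] // _.
- have h : (0 < 3 ^ i)%N by rewrite expn_gt0.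
  rewrite mod0n /G3 expnS; mlia.
- have Hq : (0 < 3 ^ i)%N by rewrite expn_gt0. have Hr := ltn_pmod d Hq.
  have Hc : (3 ^ i = 1 /\ d %% 3 ^ i = 0) \/ G3 (d %% 3 ^ i) (3 ^ i).
    by case: i IH {Hq Hr} => [|i] IH; [left; rewrite expn0 modn1 | right; exact: IH].
  rewrite expnS -muln_modr; move: Hc Hq Hr; rewrite /G3 /=.
  set r := d %% 3 ^ i; set q := 3 ^ i => Hc Hq Hr; mlia.
- have Hq : (0 < 3 ^ i)%N by rewrite expn_gt0. have Hr := ltn_pmod d Hq.
  have Hc : (3 ^ i = 1 /\ d %% 3 ^ i = 0) \/ G3 (d %% 3 ^ i) (3 ^ i).
    by case: i IH {Hq Hr} => [|i] IH; [left; rewrite expn0 modn1 | right; exact: IH].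
  have Hq3 : (0 < 3 * 3 ^ i)%N by rewrite muln_gt0.
  have Hw := ltn_pmod (3 * d + 2) Hq3.
  have := @modsum (3 * d) 2 _ Hq3.
  rewrite expnS -muln_modr (modn_small (m := 2)); last by apply: (@leq_trans 3) => //; rewrite leq_pmulr.
  move: Hc Hq Hr Hw; rewrite /G3 /=.
  set r := d %% 3 ^ i; set q := 3 ^ i; set w := (3 * d + 2) %% (3 * q) => Hc Hq Hr Hw Hs; mlia.
Qed.

Lemma pip_lt p : (0 < p)%N -> (3 * pip p < p)%N.
Proof.
move=> p0; rewrite /pip; have h1 := leq_divM p.-1 3.
have h2 : (p.-1 < p)%N by rewrite ltn_predL.
move: h1 h2; set a := p.-1 %/ 3; set b := p.-1 => h1 h2; mlia.
Qed.

Lemma good5 p d0 : prime p -> (5 <= p)%N -> Dge5 p d0 -> forall i, G5 (d0 %% p ^ i) (p ^ i).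
Proof.
move=> pp p5; have p0 := prime_gt0 pp; have hpi := @pip_lt p p0.
elim => [k hk | d k _ IH hk] [|i].
- by rewrite expn0 modn1 /G5; left; mlia.
- have hpq : (p <= p ^ i.+1)%N by rewrite expnS leq_pmulr // expn_gt0 p0.
  rewrite modn_small; last by apply: leq_trans hpq; mlia.
  rewrite /G5; left; mlia.
- by rewrite expn0 modn1 /G5; left; mlia.
- have Hq := expn_gt0 p i; rewrite p0 /= in Hq; have Hr := ltn_pmod d Hq.
  move: (IH i); rewrite /G5 expnS.
  set r := d %% p ^ i; set q := p ^ i => IHi.
  have Q0 : (0 < p * q)%N by rewrite muln_gt0 p0 Hq.
  have Hw := ltn_pmod k Q0.
  have E : (p * d) %% (p * q) = p * r by rewrite muln_modr.
  have H0 : (p * r + p <= p * q)%N.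
    by rewrite -{2}(muln1 p) -mulnDr leq_mul2l addn1 Hr orbT.
  have H1 : (3 * r < q)%coq_nat -> (3 * (p * r) + p <= p * q)%N.
    move=> h; rewrite mulnCA -{2}(muln1 p) -mulnDr leq_mul2l addn1.
    by apply/orP; right; apply/ssrnat.ltP; rewrite -multE.
  have H2 : (2 * q < 3 * r)%coq_nat -> (2 * (p * q) + p <= 3 * (p * r))%N.
    move=> h; rewrite mulnCA [3 * _]mulnCA -{2}(muln1 p) -mulnDr leq_mul2l addn1.
    by apply/orP; right; apply/ssrnat.ltP; rewrite -multE.
  have H3 : r = 0 \/ (p <= p * r)%N.
    by case: r {H0 H1 H2 IHi E} => [|r]; [left | right; rewrite leq_pmulr].
  have HP3 : p * r = 0 \/ (p <= p * r)%N.
    by case: H3 => [->|h]; [left; rewrite muln0 | right].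
  have Hj : (k - p * d) %% (p * q) = k - p * d /\ (p * d - k) %% (p * q) = p * d - k.
    case/andP: hk => hk1 hk2.
    split; rewrite modn_small //; apply: (@leq_trans p); try (by apply: leq_trans H0; rewrite leq_addl);
      move: hk1 hk2 hpi; set D := p * d; mlia.
  have Rel1 : (p * d <= k)%N -> p * r + (k - p * d) = k %% (p * q) \/
                  p * r + (k - p * d) = k %% (p * q) + p * q.
    by move=> hk2; have := @modsum (p * d) (k - p * d) _ Q0; rewrite subnKC // E (proj1 Hj).
  have Rel2 : (k < p * d)%N -> k %% (p * q) + (p * d - k) = p * r \/
                  k %% (p * q) + (p * d - k) = p * r + p * q.
    by move=> hk2; have := @modsum k (p * d - k) _ Q0; rewrite subnKC ?(ltnW hk2) // E (proj2 Hj).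
  case/andP: hk => hk1 hk2.
  move: Rel1 Rel2 Hw H0 H1 H2 HP3 IHi hk1 hk2 hpi.
  set w := k %% (p * q); set D := p * d; set P := p * r; set Q := p * q; set pi := pip p.
  move=> Rel1 Rel2 Hw H0 H1 H2 HP3 IHi hk1 hk2 hpi.
  rewrite /G5; case: (leqP D k) => hD.
  + move: (Rel1 hD) => {Rel1 Rel2} R; case: IHi => I; [move: (H1 I) | move: (H2 I)] => {H1 H2} h; mlia.
  + move: (Rel2 hD) => {Rel1 Rel2} R; case: IHi => I; [move: (H1 I) | move: (H2 I)] => {H1 H2} h; mlia.
Qed.

Definition W (r q : nat) : Prop := (3 * r < q)%coq_nat \/ (2 * q <= 3 * r)%coq_nat.

Lemma G3W r q : G3 r q -> W r q.
Proof. rewrite /G3 /W; mlia. Qed.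
Lemma G5W r q : G5 r q -> W r q.
Proof. rewrite /G5 /W; mlia. Qed.

Ltac bsolve := try done; exfalso; mlia.

Lemma LA r t q : (r < q)%N -> (t < q)%N -> (r + r = t \/ r + r = t + q) -> W r q ->
  ((q <= r + r) = (q <= r + t))%N.
Proof.
rewrite /W => h1 h2 h3 h4.
case: (leqP q (r + r)) => a1; case: (leqP q (r + t)) => a2; bsolve.
Qed.

Lemma LC r x y q : (r < q)%N -> (x < q)%N -> (y < q)%N -> (x + y = r \/ x + y = r + q) -> W r q ->
  ((q <= r + r) <= (q <= r + x) + (q <= r + y))%N.
Proof.
rewrite /W => h1 h2 h3 h4 h5.
case: (leqP q (r + r)) => a1; case: (leqP q (r + x)) => a2; case: (leqP q (r + y)) => a3; bsolve.
Qed.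

Lemma LD r x y u q : (r < q)%N -> (x < q)%N -> (y < q)%N -> (u < q)%N ->
  (x + y = u \/ x + y = u + q) -> (u + 1 = r \/ u + 1 = r + q) -> W r q ->
  ((q <= r + r) <= (q <= r + x) + (q <= r + y))%N.
Proof.
rewrite /W => h1 h2 h3 h0 h4 h6 h5.
case: (leqP q (r + r)) => a1; case: (leqP q (r + x)) => a2; case: (leqP q (r + y)) => a3; bsolve.
Qed.

Lemma LE r x y s q : (r < q)%N -> (x < q)%N -> (y < q)%N -> (s < q)%N ->
  (x + y = r \/ x + y = r + q) -> (r + 1 = s \/ r + 1 = s + q) -> G3 r q ->
  ((q <= r + s) <= (q <= r + x) + (q <= s + y))%N.
Proof.
rewrite /G3 => h1 h2 h3 h0 h4 h6 h5.
case: (leqP q (r + s)) => a1; case: (leqP q (r + x)) => a2; case: (leqP q (s + y)) => a3; bsolve.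
Qed.

Lemma LB r s t q : (r < q)%N -> (s < q)%N -> (t < q)%N ->
  (r + 1 = s \/ r + 1 = s + q) -> (s + s = t \/ s + s = t + q) -> G3 r q ->
  ((q <= r + s) = (q <= r + t))%N.
Proof.
rewrite /G3 => h1 h2 h3 h4 h5 h6.
case: (leqP q (r + s)) => a1; case: (leqP q (r + t)) => a2; bsolve.
Qed.

Lemma L2D r x y u q : (r < q)%N -> (x < q)%N -> (y < q)%N -> (u < q)%N ->
  (x + y = u \/ x + y = u + q) -> (u + 1 = r \/ u + 1 = r + q) -> G5 r q ->
  ((q <= r + r) <= (q <= u + x) + (q <= r + y))%N.
Proof.
rewrite /G5 => h1 h2 h3 h0 h4 h6 h5.
case: (leqP q (r + r)) => a1; case: (leqP q (u + x)) => a2; case: (leqP q (r + y)) => a3; bsolve.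
Qed.

Lemma e3 (d a : nat) : (a <= 3 * d)%N -> (3 * d%:Z - a%:Z)%R = Posz (3 * d - a).
Proof. move=> h. by rewrite subzn // PoszM. Qed.
Lemma e3m (d a : nat) : (a.+1 <= 3 * d)%N -> (3 * d%:Z - 1 - a%:Z)%R = Posz (3 * d - a.+1).
Proof. move=> h. rewrite -subzn // PoszM -[a.+1]addn1 PoszD opprD addrA. by rewrite addrAC. Qed.
Lemma e3m2 (d a : nat) : (a.+2 <= 3 * d)%N -> (3 * d%:Z - 2 - a%:Z)%R = Posz (3 * d - a.+2).
Proof. move=> h. rewrite addrAC e3; last by mlia.
rewrite (_ : 2%R = Posz 2) // subzn; last by mlia.
by rewrite -subnDA addn2.
Qed.
Lemma e3p (d a : nat) : (a <= 3 * d + 1)%N -> (3 * d%:Z + 1 - a%:Z)%R = Posz (3 * d + 1 - a).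
Proof. move=> h. by rewrite -subzn // PoszD PoszM. Qed.

Lemma vp0 p : vp p 0 = None.
Proof. by []. Qed.

Lemma binz_d0 m : binz m (Posz 0) = 1%R.
Proof. by rewrite /binz big_ord0. Qed.

Lemma vge_pos p m1 m2 n : (0 < m1)%N -> (0 < m2)%N -> (0 < n)%N ->
  (logn p n <= logn p m1 + logn p m2)%N -> vge (vp p (Posz m1 * Posz m2)%R) (vp p (Posz n)).
Proof.
move=> h1 h2 h3 h; rewrite -PoszM !vpPos ?muln_gt0 ?h1 ?h2 //= lognM //.
Qed.

Lemma vge_z1 p x y : vge (vp p (0 * x)%R) y.
Proof. by rewrite mul0r vp0. Qed.
Lemma vge_z2 p x y : vge (vp p (x * 0)%R) y.
Proof. by rewrite mulr0 vp0. Qed.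

Definition WD p d := forall i, (0 < i)%N -> W (d %% p ^ i) (p ^ i).

Lemma PA p d : prime p -> WD p d -> vp p (binz (2 * d)%N d) = vp p (binz (3 * d)%N d).
Proof.
move=> pp HW; rewrite !binzE !vpPos ?bin_gt0 ?leq_pmull //; congr Some.
rewrite (_ : 3 * d = d + (d + d))%N; last by mlia.
rewrite (_ : 2 * d = d + d)%N; last by mlia.
rewrite !(@lognC p _ _ (3 * d + 3)) //; try mlia.
apply: eq_bigr => -[|i] _; first by rewrite expn0 !modn1.
have q0 : (0 < p ^ i.+1)%N by rewrite expn_gt0 prime_gt0.
congr (nat_of_bool _); apply: LA; [exact: ltn_pmod | exact: ltn_pmod | | exact: HW].
exact: modsum.
Qed.

Lemma coreC p d e f : prime p -> WD p d -> (e + f = d)%N ->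
  (logn p 'C(d + d, d) <= logn p 'C(d + e, d) + logn p 'C(d + f, d))%N.
Proof.
move=> pp HW hf.
rewrite !(@lognC p _ _ (3 * d + 3)) //; try mlia.
rewrite -big_split /=; apply: leq_sum => -[|i] _; first by rewrite expn0 !modn1.
have q0 : (0 < p ^ i.+1)%N by rewrite expn_gt0 prime_gt0.
apply: LC; [exact: ltn_pmod | exact: ltn_pmod | exact: ltn_pmod | | exact: HW].
by have := @modsum e f _ q0; rewrite hf.
Qed.

Lemma PC p d a : prime p -> WD p d -> (a <= 2 * d)%N ->
  vge (vp p (binz a d * binz (3 * d%:Z - a%:Z) d)%R) (vp p (binz (2 * d)%N d)).
Proof.
move=> pp HW ha.
case: (ltnP a d) => had; first by rewrite binzE bin_small // vge_z1.
rewrite e3; last by mlia.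
rewrite !binzE.
have E2 : (3 * d - a = d + (2 * d - a))%N by mlia.
have E3 : (2 * d = d + d)%N by mlia.
have hf : (a - d + (2 * d - a) = d)%N by mlia.
apply: vge_pos; rewrite ?bin_gt0 ?leq_pmull //; try mlia.
have := @coreC p d _ _ pp HW hf; by rewrite (subnKC had) -E2 -E3.
Qed.

Lemma q1 p i : prime p -> (1 < p ^ i.+1)%N.
Proof.
move=> pp; apply: (leq_trans (prime_gt1 pp)).
by rewrite expnS leq_pmulr // expn_gt0 prime_gt0.
Qed.

Lemma coreD p d e f : prime p -> WD p d -> (0 < d)%N -> (e + f = d - 1)%N ->
  (logn p 'C(d + d, d) <= logn p 'C(d + e, d) + logn p 'C(d + f, d))%N.
Proof.
move=> pp HW d0 hf.
rewrite !(@lognC p _ _ (3 * d + 3)) //; try mlia.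
rewrite -big_split /=; apply: leq_sum => -[|i] _; first by rewrite expn0 !modn1.
have q0 : (0 < p ^ i.+1)%N by rewrite expn_gt0 prime_gt0.
apply: (@LD _ _ _ ((d - 1) %% p ^ i.+1)); try exact: ltn_pmod; last exact: HW.
  by have := @modsum e f _ q0; rewrite hf.
by have := @modsum (d - 1) 1 _ q0; rewrite subnK // (modn_small (@q1 p i pp)).
Qed.

Lemma PD p d a : prime p -> WD p d -> (a <= 2 * d)%N ->
  vge (vp p (binz a d * binz (3 * d%:Z - 1 - a%:Z) d)%R) (vp p (binz (2 * d)%N d)).
Proof.
move=> pp HW ha.
case: (posnP d) => d0.
  subst d; have -> : a = 0%N by mlia.
  by rewrite !binz_d0 mulr1 /= leqnn.
case: (ltnP a d) => had; first by rewrite binzE bin_small // vge_z1.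
rewrite e3m; last by mlia.
rewrite !binzE.
case: (ltnP (3 * d - a.+1) d) => h3; first by rewrite (bin_small h3) vge_z2.
have E2 : (3 * d - a.+1 = d + (2 * d - 1 - a))%N by mlia.
have E3 : (2 * d = d + d)%N by mlia.
have hf : (a - d + (2 * d - 1 - a) = d - 1)%N by mlia.
apply: vge_pos; rewrite ?bin_gt0 ?leq_pmull //; try mlia.
have := @coreD p d _ _ pp HW d0 hf; by rewrite (subnKC had) -E2 -E3.
Qed.

Definition G3D d := forall i, (0 < i)%N -> G3 (d %% 3 ^ i) (3 ^ i).

Lemma PB d : G3D d -> vp 3 (binz (2 * d + 1)%N d) = vp 3 (binz (3 * d + 2)%N d).
Proof.
move=> HG; rewrite !binzE !vpPos ?bin_gt0; try mlia; congr Some.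
rewrite (_ : 3 * d + 2 = d + (d.+1 + d.+1))%N; last by mlia.
rewrite (_ : 2 * d + 1 = d + d.+1)%N; last by mlia.
rewrite !(@lognC 3 _ _ (3 * d + 3)) //; try mlia.
apply: eq_bigr => -[|i] _; first by rewrite expn0 !modn1.
have q0 : (0 < 3 ^ i.+1)%N by rewrite expn_gt0.
congr (nat_of_bool _); apply: LB; try exact: ltn_pmod; last exact: HG.
  by have := @modsum d 1 _ q0; rewrite (modn_small (@q1 3 i isT)) ?addn1.
exact: modsum.
Qed.

Lemma coreE d e f : G3D d -> (e + f = d)%N ->
  (logn 3 'C(d + d.+1, d) <= logn 3 'C(d + e, d) + logn 3 'C(d.+1 + f, d.+1))%N.
Proof.
move=> HG hf.
rewrite !(@lognC 3 _ _ (3 * d + 3)) //; try mlia.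
rewrite -big_split /=; apply: leq_sum => -[|i] _; first by rewrite expn0 !modn1.
have q0 : (0 < 3 ^ i.+1)%N by rewrite expn_gt0.
apply: LE; try exact: ltn_pmod; last exact: HG.
  by have := @modsum e f _ q0; rewrite hf.
by have := @modsum d 1 _ q0; rewrite (modn_small (@q1 3 i isT)) ?addn1.
Qed.

Lemma PE d a : G3D d -> (a <= 2 * d)%N ->
  vge (vp 3 (binz a d * binz (3 * d%:Z + 1 - a%:Z) (d.+1)%N)%R)
      (vp 3 (binz (2 * d + 1)%N d)).
Proof.
move=> HG ha.
case: (ltnP a d) => had; first by rewrite binzE bin_small // vge_z1.
rewrite e3p; last by mlia.
rewrite !binzE.
have E2 : (3 * d + 1 - a = d.+1 + (2 * d - a))%N by mlia.
have E3 : (2 * d + 1 = d + d.+1)%N by mlia.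
have hf : (a - d + (2 * d - a) = d)%N by mlia.
apply: vge_pos; rewrite ?bin_gt0; try mlia.
have := @coreE d _ _ HG hf; by rewrite (subnKC had) -E2 -E3.
Qed.

Definition G5D p d := forall i, G5 (d %% p ^ i) (p ^ i).

Lemma core2D p d e f : prime p -> G5D p d -> (0 < d)%N -> (e + f = d - 1)%N ->
  (logn p 'C(d + d, d) <= logn p 'C(d - 1 + e, d - 1) + logn p 'C(d + f, d))%N.
Proof.
move=> pp HG d0 hf.
rewrite !(@lognC p _ _ (3 * d + 3)) //; try mlia.
rewrite -big_split /=; apply: leq_sum => -[|i] _; first by rewrite expn0 !modn1.
have q0 : (0 < p ^ i.+1)%N by rewrite expn_gt0 prime_gt0.
apply: L2D; try exact: ltn_pmod; last exact: HG.
  by have := @modsum e f _ q0; rewrite hf.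
by have := @modsum (d - 1) 1 _ q0; rewrite subnK // (modn_small (@q1 p i pp)).
Qed.

Lemma binz1 m : binz m (Posz 1) = m.
Proof. by rewrite /binz big_ord1 subr0 divz1. Qed.

Lemma binzN m : binz m (Posz 0 - 1)%R = 0%R.
Proof. by []. Qed.

Lemma P2D p d a : prime p -> (5 <= p)%N -> G5D p d -> (a <= 2 * d)%N ->
  vge (vp p (binz a (d%:Z - 1) * binz (3 * d%:Z - 2 - a%:Z) d)%R)
      (vp p (binz (2 * d)%N d)).
Proof.
move=> pp p5 HG ha.
case: (posnP d) => d0.
  by subst d; rewrite binzN vge_z1.
rewrite (_ : (d%:Z - 1)%R = Posz (d - 1)); last by rewrite subzn.
case: (ltnP a (d - 1)) => had; first by rewrite binzE bin_small // vge_z1.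
case: (leqP a.+2 (3 * d)) => h2.
  rewrite e3m2 // !binzE.
  case: (ltnP (3 * d - a.+2) d) => h3; first by rewrite (bin_small h3) vge_z2.
  have E2 : (3 * d - a.+2 = d + (2 * d - 2 - a))%N by mlia.
  have E3 : (2 * d = d + d)%N by mlia.
  have hf : (a - (d - 1) + (2 * d - 2 - a) = d - 1)%N by mlia.
  apply: vge_pos; rewrite ?bin_gt0 ?leq_pmull //; try mlia.
  have := @core2D p d _ _ pp HG d0 hf; by rewrite (subnKC had) -E2 -E3.
have hd1 : d = 1%N by mlia.
have ha2 : a = 2%N by mlia.
subst d a.
rewrite subnn binzE bin0 binz1 mul1r.
match goal with |- is_true (vge (vp _ ?X) _) => have -> : X = (-1)%R by [] end.
rewrite binzE vpPos ?bin_gt0 // /vp /= logn1 bin1.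
rewrite lognE; case: ifP => //.
case/and3P => _ _ /dvdn_leq h; have := h isT; mlia.
Qed.

Theorem theorem1p9 (p d : nat) (hp : prime p) (hp3 : (3 <= p)%N) (hd : Dset p d) :
  (p = 3 ->
     vp 3 (binz (2 * d)%N d) = vp 3 (binz (3 * d)%N d) /\
     vp 3 (binz (2 * d + 1)%N d) = vp 3 (binz (3 * d + 2)%N d) /\
     (forall a : nat, (a <= 2 * d)%N ->
        vge (vp 3 (binz a d * binz (3 * d%:Z - a%:Z) d)%R) (vp 3 (binz (2 * d)%N d)) /\
        vge (vp 3 (binz a d * binz (3 * d%:Z - 1 - a%:Z) d)%R) (vp 3 (binz (2 * d)%N d)) /\
        vge (vp 3 (binz a d * binz (3 * d%:Z + 1 - a%:Z) (d.+1)%N)%R)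
            (vp 3 (binz (2 * d + 1)%N d)))) /\
  ((5 <= p)%N ->
     vp p (binz (2 * d)%N d) = vp p (binz (3 * d)%N d) /\
     (forall a : nat, (a <= 2 * d)%N ->
        vge (vp p (binz a d * binz (3 * d%:Z - a%:Z) d)%R) (vp p (binz (2 * d)%N d)) /\
        vge (vp p (binz a d * binz (3 * d%:Z - 1 - a%:Z) d)%R) (vp p (binz (2 * d)%N d)) /\
        vge (vp p (binz a (d%:Z - 1) * binz (3 * d%:Z - 2 - a%:Z) d)%R)
            (vp p (binz (2 * d)%N d)))).
Proof.
split.
- move=> p3; subst p; rewrite /Dset /= in hd.
  have HG : G3D d := @good3 d hd.
  have HW : WD 3 d := fun i hi => @G3W _ _ (HG i hi).
  split; first exact: PA.
  split; first exact: PB.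
  move=> a ha; split; [exact: PC | split; [exact: PD | exact: PE]].
- move=> p5.
  have hd' : Dge5 p d.
    move: hd; rewrite /Dset; case: eqP => [h|_] hd0 //; by rewrite h in p5.
  have HG : G5D p d := @good5 p d hp p5 hd'.
  have HW : WD p d := fun i _ => @G5W _ _ (HG i).
  split; first exact: PA.
  move=> a ha; split; [exact: PC | split; [exact: PD | exact: P2D]].
Qed.
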